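(* Let $\underline q>0$, let $\theta^*\in\Theta(\underline q)$, and let the fixed initial distribution $\mu$ satisfy $\mu_i\ge\underline q$ for all $i$. If (A1) holds, then for every $\epsilon\in(0,1)$ for which $\Theta_\epsilon$ is defined in (A1), there exists $N\in\mathbb N$ such that for all $n\ge N$ and all $\theta\in\Theta_\epsilon$, $$\frac1n\,KL\big(P_n^{\theta^*},P_n^{\theta,\mu}\big)\le\frac{3}{\underline q}\,\epsilon,$$ where $P_n^{\theta,\mu}=p_n^{\theta,\mu}\lambda^{\otimes n}$ is the law of $Y_{1:n}$ under $\mathbb P^{\theta,\mu}$ and $KL(P_1,P_2)=\int p_1\log(p_1/p_2)$ if $P_1\ll P_2$, $+\infty$ otherwise.
   Context: Fix integers $k\ge1$, $d\ge1$. $\lambda$ is a $\sigma$-finite reference measure on $\mathbb R^d$ (Borel $\sigma$-field) and $\mathcal F$ is the set of probability densities with respect to $\lambda$. $\Delta_k=\{x\in[0,\infty)^k:\sum_i x_i=1\}$; a transition matrix is an element $Q\in\Delta_k^k$ (each row lies in $\Delta_k$). For $\underline q\ge0$, $\Delta^k(\underline q)=\{Q\in\Delta_k^k:\min_{i,j}Q_{i,j}\ge\underline q\}$, $\Theta=\Delta_k^k\times\mathcal F^k$ and $\Theta(\underline q)=\Delta^k(\underline q)\times\mathcal F^k$. For $\underline q>0$ and $Q\in\Delta^k(\underline q)$, $\mu^Q$ denotes the unique stationary distribution of $Q$. For $\theta=(Q,f)$, $f=(f_1,\dots,f_k)\in\mathcal F^k$, and an initial distribution $\nu\in\Delta_k$,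 $\mathbb P^{\theta,\nu}$ is the law of the hidden Markov model $(X_t,Y_t)_{t\ge1}$: $(X_t)$ is a Markov chain on $\{1,\dots,k\}$ with initial law $\nu$ and transition matrix $Q$, and conditionally on $(X_t)_t$ the variables $Y_t\in\mathbb R^d$ are independent, $Y_t$ having density $f_{X_t}$ with respect to $\lambda$. $\mathbb P^\theta:=\mathbb P^{\theta,\mu^Q}$. The density of $Y_{1:l}$ with respect to $\lambda^{\otimes l}$ is $p_l^{\theta,\nu}(y_{1:l})=\sum_{x_1,\dots,x_l=1}^k\nu_{x_1}Q_{x_1,x_2}\cdots Q_{x_{l-1},x_l}f_{x_1}(y_1)\cdots f_{x_l}(y_l)$; $p_l^\theta:=p_l^{\theta,\mu^Q}$, $P_l^\theta:=p_l^\theta\lambda^{\otimes l}$. The prior is $\pi=\pi_Q\otimes\pi_f$ on $\Theta$ with a fixed initial distribution $\mu\in\Delta_k$. $\theta^*=(Q^*,f^* )$ is the true parameter. $\|M\|=\max_{i,j}|M_{i,j}|$. Assumption (A1) (for given $\underline q>0$): there is $\epsilon_0>0$ such that for every $\epsilon\in(0,\epsilon_0)$ there is a set $\Theta_\epsilon\subset\Theta(\underline q)$ with $\pi(\Theta_\epsilon)>0$ such that every $\theta=(Q,f)\in\Theta_\epsilon$ satisfies: (A1a) $\|Q-Q^*\|<\epsilon$; (A1b) $\max_{1\le i\le k}\int f_i^*(y)\max_{1\le j\le k}\log\big(f_j^*(y)/f_j(y)\big)\lambda(dy)<\epsilon$; (A1c) for all $y$ with $\sum_i f_i^*(y)>0$,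 $\sum_j f_j(y)>0$; (A1d) $\sup_{y:\sum_i f_i^*(y)>0}\max_j f_j(y)<\infty$; (A1e) $\sum_{i=1}^k\int f_i^*(y)\,\big|\log\big(\sum_{j=1}^k f_j(y)\big)\big|\lambda(dy)<\infty$. *)

(* Defs.v *)
From HB Require Import structures.
From mathcomp Require Import all_boot all_order all_algebra.
From mathcomp Require Import all_classical all_reals all_analysis.
Import Order.TTheory GRing.Theory Num.Theory.

Set Implicit Arguments.
Unset Strict Implicit.
Unset Printing Implicit Defensive.

Local Open Scope classical_set_scope.
Local Open Scope ring_scope.

(* Carrier types of the two factors of the parameter space
   Theta = Delta_k^k x F^k; they are given a (trivial) pointed structure
   so that they can carry an arbitrary sigma-algebra (g_sigma_algebraType). *)
Definition trans_mat (k : nat) (R : realType) : Type := 'M[R]_k.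
HB.instance Definition _ k (R : realType) := Choice.on (trans_mat k R).
HB.instance Definition _ k (R : realType) :=
  isPointed.Build (trans_mat k R) (0 : 'M[R]_k).
Definition emis (k : nat) (T : Type) (R : realType) : Type := 'I_k -> T -> R.
HB.instance Definition _ k T (R : realType) := Choice.on (emis k T R).
HB.instance Definition _ k T (R : realType) :=
  isPointed.Build (emis k T R) (fun _ _ => 0).

Section hmm_defs.
Variables (R : realType) (k : nat).

Definition in_simplex (v : 'I_k -> R) : Prop :=
  (forall i, 0 <= v i) /\ \sum_i v i = 1.

Definition transition_matrix (Q : 'M[R]_k) : Prop :=
  forall i, in_simplex (fun j => Q i j).

Definition in_Delta_lb (qlow : R) (Q : 'M[R]_k) : Prop :=
  transition_matrix Q /\ forall i j, qlow <= Q i j.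

Definition is_stationary (Q : 'M[R]_k) (m : 'I_k -> R) : Prop :=
  in_simplex m /\ forall j, \sum_i m i * Q i j = m j.

Definition init_weight (nu : 'I_k -> R) (x : seq 'I_k) : R :=
  if x is x0 :: _ then nu x0 else 1.

Fixpoint chain_weight (Q : 'M[R]_k) (x : seq 'I_k) : R :=
  match x with
  | x1 :: ((x2 :: _) as x') => Q x1 x2 * chain_weight Q x'
  | _ => 1
  end.

Definition hmm_density (T : Type) (nu : 'I_k -> R) (Q : 'M[R]_k)
    (f : 'I_k -> T -> R) (l : nat) (y : l.-tuple T) : R :=
  \sum_(x : l.-tuple 'I_k)
     init_weight nu x * chain_weight Q x * \prod_(t < l) f (tnth x t) (tnth y t).

End hmm_defs.
Arguments hmm_density {R k T} nu Q f l y.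

Section measure_defs.
Context {dT : measure_display} {T : measurableType dT} {R : realType}.
Local Open Scope ereal_scope.

Definition is_density (lam : set T -> \bar R) (f : T -> R) : Prop :=
  measurable_fun setT f /\ (forall y, (0 <= f y)%R) /\
  \int[lam]_y (f y)%:E = 1.

Definition dens_meas (mu : set T -> \bar R) (p : T -> R) (A : set T) : \bar R :=
  \int[mu]_(y in A) (p y)%:E.

Definition abs_cont (mu : set T -> \bar R) (p1 p2 : T -> R) : Prop :=
  forall A, measurable A -> dens_meas mu p2 A = 0 -> dens_meas mu p1 A = 0.

Definition KL (mu : set T -> \bar R) (p1 p2 : T -> R) : \bar R :=
  if `[< abs_cont mu p1 p2 >] then \int[mu]_y ((p1 y * ln (p1 y / p2 y))%R)%:E
  else +oo.

End measure_defs.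

(* n-fold product measure lam^{(x)n} on n.-tuple T (tuple sigma-algebra),
   built by iterated integration of sections:
   lam^{(x)0} = Dirac at the empty tuple,
   lam^{(x)(n+1)}(A) = int lam(dy) lam^{(x)n}([set t | (y :: t) \in A]). *)
Fixpoint prod_meas {dT : measure_display} {T : measurableType dT} {R : realType}
    (lam : {measure set T -> \bar R}) (n : nat) : set (n.-tuple T) -> \bar R :=
  match n return set (n.-tuple T) -> \bar R with
  | 0 => fun A => ((\1_A : _ -> R) [tuple])%:E
  | m.+1 => fun A =>
      (\int[lam]_y prod_meas lam [set t : m.-tuple T | A (cons_tuple y t)])%E
  end.

Arguments prod_meas {dT T R} lam n _.

Definition log_ratio {R : realType} (a b : R) : \bar R :=
  (if a == 0%R then -oo else if b == 0%R then +oo else (ln (a / b))%:E)%E.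

Section A1.
Context {dT : measure_display} {T : measurableType dT} {R : realType} {k : nat}.
Variables (lam : {measure set T -> \bar R}) (Qs : 'M[R]_k) (fs : 'I_k -> T -> R).
Local Open Scope ereal_scope.

Definition in_Theta_lb (qlow : R) (Q : 'M[R]_k) (f : 'I_k -> T -> R) : Prop :=
  in_Delta_lb qlow Q /\ forall i, is_density lam (f i).

Definition A1a (eps : R) (Q : 'M[R]_k) : Prop :=
  forall i j, (`|Q i j - Qs i j| < eps)%R.

Definition A1b (eps : R) (f : 'I_k -> T -> R) : Prop :=
  forall i, \int[lam]_y ((fs i y)%:E *
                \big[Order.max/-oo]_(j < k) log_ratio (fs j y) (f j y)) < eps%:E.

Definition A1c (f : 'I_k -> T -> R) : Prop :=
  forall y, (0 < \sum_i fs i y)%R -> (0 < \sum_j f j y)%R.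

Definition A1d (f : 'I_k -> T -> R) : Prop :=
  exists M : R, forall y, (0 < \sum_i fs i y)%R -> forall j, (f j y <= M)%R.

Definition A1e (f : 'I_k -> T -> R) : Prop :=
  \sum_(i < k) \int[lam]_y ((fs i y * `|ln (\sum_j f j y)|)%R)%:E < +oo.

End A1.

(* Main.v *)
Require Import Defs.
From HB Require Import structures.
From mathcomp Require Import all_boot all_order all_algebra.
From mathcomp Require Import all_classical all_reals all_analysis.
From mathcomp Require Import measurable_realfun.
Import Order.TTheory GRing.Theory Num.Theory.
Import numFieldNormedType.Exports.
Local Open Scope classical_set_scope.
Local Open Scope ring_scope.

Section tuple_measure.
Context {dT : measure_display} {T : measurableType dT} {R : realType}.
Variable lam : {sigma_finite_measure set T -> \bar R}.
Local Open Scope ereal_scope.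

Definition tcons n (z : T * n.-tuple T) : n.+1.-tuple T := cons_tuple z.1 z.2.
Arguments tcons {n}.
Lemma measurable_tcons n : measurable_fun setT (@tcons n).
Proof. exact: (measurable_cons measurable_fst measurable_snd). Qed.

Definition tuncons n (t : n.+1.-tuple T) : T * n.-tuple T :=
  (thead t, [tuple of behead t]).
Arguments tuncons {n}.
Lemma measurable_tuncons n : measurable_fun setT (@tuncons n).
Proof.
apply: measurable_fun_pair; last exact: measurable_behead.
exact: measurable_tnth.
Qed.

Lemma tunconsK n : cancel (@tcons n) (@tuncons n).
Proof. by move=> [y t]; rewrite /tuncons /tcons /=; congr pair; apply: val_inj. Qed.
Lemma tconsK n : cancel (@tuncons n) (@tcons n).
Proof. by move=> t; apply: val_inj; rewrite /= [in RHS](tuple_eta t). Qed.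

Section consm.
Variables (n : nat) (P : {sigma_finite_measure set (n.-tuple T) -> \bar R}).
Definition consm : set (n.+1.-tuple T) -> \bar R :=
  pushforward (lam \x P) (@tcons n).

Let consm0 : consm set0 = 0.
Proof. by rewrite /consm /pushforward preimage_set0 measure0. Qed.

Let consm_ge0 A : 0 <= consm A.
Proof. rewrite /consm /pushforward. exact: measure_ge0. Qed.

Let consm_sigma_additive : semi_sigma_additive consm.
Proof.
move=> F mF tF mUF; rewrite /consm /pushforward preimage_bigcup.
apply: measure_semi_sigma_additive.
- by move=> k; rewrite -[X in measurable X]setTI; exact: measurable_tcons.
- apply/trivIsetP => /= i j _ _ ij; rewrite -preimage_setI.
  by move/trivIsetP : tF => /(_ _ _ _ _ ij) ->//; rewrite preimage_set0.
- by rewrite -preimage_bigcup -[X in measurable X]setTI; exact: measurable_tcons.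
Qed.

HB.instance Definition _ := isMeasure.Build _ _ _ consm
  consm0 consm_ge0 consm_sigma_additive.

Let prod_sf : sigma_finite setT (lam \x P).
Proof.
have /sigma_finiteP[F [TF ndF Foo]] := sigma_finiteT lam.
have /sigma_finiteP[G [TG ndG Goo]] := sigma_finiteT P.
exists (fun i => F i `*` G i).
 rewrite -setXTT TF TG predeqE => -[x y]; split.
    move=> [/= [i _ Fnx] [j _ Gky]]; exists (maxn i j) => //; split.
    - by move: x Fnx; exact/subsetPset/ndF/leq_maxl.
    - by move: y Gky; exact/subsetPset/ndG/leq_maxr.
  by move=> [i _ []/= ? ?]; split; exists i.
move=> k; have [? ?] := Foo k; have [? ?] := Goo k.
split; first exact: measurableX.
by rewrite product_measure1E// lte_mul_pinfty// ge0_fin_numE.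
Qed.

Let consm_sigma_finite : sigma_finite setT consm.
Proof.
have [F FT Ffin] := prod_sf.
exists (fun i => (@tuncons n) @^-1` F i).
  apply/seteqP; split => // t _.
  have : setT (tuncons t) by [].
  by rewrite FT => -[i _ Fi]; exists i.
move=> i; have [mF Flt] := Ffin i; split.
  by rewrite -[X in measurable X]setTI; exact: measurable_tuncons.
rewrite /consm /pushforward (_ : _ @^-1` _ = F i) //.
by apply/seteqP; split => z /=; rewrite tunconsK.
Qed.

HB.instance Definition _ := Measure_isSigmaFinite.Build _ _ _ consm
  consm_sigma_finite.

End consm.

Lemma prod_meas_sf n : exists P : {sigma_finite_measure set (n.-tuple T) -> \bar R},
  prod_meas lam n = P.
Proof.
elim: n => [|n [P PE]].
  exists (\d_[tuple] : {sigma_finite_measure set (0.-tuple T) -> \bar R}).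
  by apply/funext => A /=; rewrite diracE.
exists (@consm n P); apply/funext => A /=.
rewrite /consm /pushforward /product_measure1 PE.
apply: eq_integral => y _ /=; congr (P _).
by apply/seteqP; split => t /=; rewrite /xsection /= inE.
Qed.


Lemma prod_meas_S n (P : {sigma_finite_measure set (n.-tuple T) -> \bar R}) :
  prod_meas lam n = P -> prod_meas lam n.+1 = @consm n P.
Proof.
move=> PE; apply/funext => A /=.
rewrite /consm /pushforward /product_measure1 PE.
apply: eq_integral => y _ /=; congr (P _).
by apply/seteqP; split => t /=; rewrite /xsection /= inE.
Qed.

Lemma int_prod n (g : n.+1.-tuple T -> \bar R) :
  measurable_fun setT g -> (forall x, 0 <= g x) ->
  \int[prod_meas lam n.+1]_y g y =
  \int[lam]_z \int[prod_meas lam n]_t g (cons_tuple z t).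
Proof.
move=> mg g0.
have [P PE] := prod_meas_sf n.
rewrite (prod_meas_S _ _ PE) PE /consm.
rewrite ge0_integral_pushforward //; last exact: measurable_tcons.
rewrite preimage_setT.
rewrite (@fubini_tonelli1 _ _ _ _ _ lam P (g \o tcons)) //.
exact: measurableT_comp (measurable_tcons n).
by move=> ?; exact: g0.
Qed.


Variable k : nat.

Definition Fx (g : 'I_k -> T -> R) n (x : n.-tuple 'I_k) (y : n.-tuple T) : R :=
  \prod_(t < n) g (tnth x t) (tnth y t).
Arguments Fx g {n} x y.

Lemma Fx_cons g n x0 (x : n.-tuple 'I_k) y0 (y : n.-tuple T) :
  Fx g (cons_tuple x0 x) (cons_tuple y0 y) = (g x0 y0 * Fx g x y)%R.
Proof.
rewrite /Fx big_ord_recl /=; congr (_ * _)%R.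
by apply: eq_bigr => i _; rewrite !tnthS.
Qed.

Lemma measurable_Fx g n (x : n.-tuple 'I_k) :
  (forall i, measurable_fun setT (g i)) -> measurable_fun setT (Fx g x).
Proof.
move=> mg; apply: measurable_prod => t _.
exact: measurableT_comp (mg _) (measurable_tnth t).
Qed.

Lemma Fx_ge0 g n (x : n.-tuple 'I_k) y :
  (forall i z, (0 <= g i z)%R) -> (0 <= Fx g x y)%R.
Proof. by move=> g0; apply: prodr_ge0 => t _. Qed.

Lemma prod_meas0 : prod_meas lam 0 = \d_[tuple].
Proof. by apply/funext => A /=; rewrite diracE. Qed.

Lemma int_Fx1 g : (forall i, is_density lam (g i)) ->
  forall n (x : n.-tuple 'I_k), \int[prod_meas lam n]_y (Fx g x y)%:E = 1.
Proof.
move=> gd; have mg i : measurable_fun setT (g i) by case: (gd i).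
have g0 i z : (0 <= g i z)%R by case: (gd i) => _ [].
elim=> [|n IH] x.
  rewrite prod_meas0 integral_dirac //; last first.
    by apply/measurable_EFinP; exact: measurable_Fx.
  rewrite diracE /Fx big_ord0.
  by rewrite in_setT mule1.
case/tupleP: x => x0 x.
rewrite int_prod; last 2 first.
- by apply/measurable_EFinP; exact: measurable_Fx.
- by move=> y; rewrite lee_fin; exact: Fx_ge0.
have [P PE] := prod_meas_sf n.
have IH' := IH x; rewrite PE in IH'.
transitivity (\int[lam]_z (g x0 z)%:E).
  apply: eq_integral => z _.
  rewrite PE.
  under eq_integral do rewrite Fx_cons EFinM.
  rewrite ge0_integralZl //; first by rewrite IH' mule1.
  - by apply/measurable_EFinP; exact: measurable_Fx.
  - by move=> y _; rewrite lee_fin; exact: Fx_ge0.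
  by rewrite lee_fin.
by case: (gd x0) => _ [_ ->].
Qed.

Lemma int_Fxh g : (forall i, is_density lam (g i)) ->
  forall (h : T -> \bar R), measurable_fun setT h -> (forall z, 0 <= h z) ->
  forall n (x : n.-tuple 'I_k) (t : 'I_n),
  \int[prod_meas lam n]_y ((Fx g x y)%:E * h (tnth y t)) =
  \int[lam]_z ((g (tnth x t) z)%:E * h z).
Proof.
move=> gd h mh h0.
have mg i : measurable_fun setT (g i) by case: (gd i).
have g0 i z : (0 <= g i z)%R by case: (gd i) => _ [].
elim=> [|n IH] x t; first by case: t.
case/tupleP: x => x0 x.
rewrite int_prod; last 2 first.
- apply: emeasurable_funM; first by apply/measurable_EFinP; exact: measurable_Fx.
  exact: measurableT_comp mh (measurable_tnth t).
- by move=> y; apply: mule_ge0 => //; rewrite lee_fin; exact: Fx_ge0.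
have [P PE] := prod_meas_sf n.
case: (unliftP ord0 t) => [t'|] ->.
  have IH' := IH x t'; rewrite PE in IH'.
  transitivity (\int[lam]_z ((g x0 z)%:E * \int[lam]_z ((g (tnth x t') z)%:E * h z))).
    apply: eq_integral => z _; rewrite PE.
    under eq_integral do rewrite Fx_cons EFinM tnthS -muleA.
    rewrite ge0_integralZl //; first by rewrite IH'.
    - apply: emeasurable_funM; first by apply/measurable_EFinP; exact: measurable_Fx.
      exact: measurableT_comp mh (measurable_tnth t').
    - by move=> y _; apply: mule_ge0 => //; rewrite lee_fin; exact: Fx_ge0.
    - by rewrite lee_fin.
  rewrite ge0_integralZr //.
  - by case: (gd x0) => _ [_ ->]; rewrite mul1e tnthS.
  - exact/measurable_EFinP.
  - by move=> z _; rewrite lee_fin.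
  - by apply: integral_ge0 => z _; apply: mule_ge0 => //; rewrite lee_fin.
apply: eq_integral => z _; rewrite PE.
have I1 := @int_Fx1 g gd n x; rewrite PE in I1.
transitivity (\int[P]_s (((g x0 z)%:E * h z) * (Fx g x s)%:E)).
  apply: eq_integral => s _; rewrite Fx_cons EFinM.
  by rewrite (_ : tnth (cons_tuple z s) ord0 = z) // muleAC.
rewrite ge0_integralZl //.
- by rewrite I1 mule1.
- by apply/measurable_EFinP; exact: measurable_Fx.
- by move=> y _; rewrite lee_fin; exact: Fx_ge0.
- by apply: mule_ge0 => //; rewrite lee_fin.
Qed.

End tuple_measure.

Set Implicit Arguments. Unset Strict Implicit.
From mathcomp Require Import ring lra.
Section weights.
Variables (R : realType) (k : nat).

Lemma big_tuple_cons n (F : n.+1.-tuple 'I_k -> R) :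
  \sum_(x : n.+1.-tuple 'I_k) F x =
  \sum_(a : 'I_k) \sum_(x : n.-tuple 'I_k) F (cons_tuple a x).
Proof.
rewrite pair_big /=.
rewrite (reindex (fun p : 'I_k * n.-tuple 'I_k => cons_tuple p.1 p.2)) //=.
apply: onW_bij.
exists (fun x => (thead x, behead_tuple x)).
  by move=> [a x] /=; congr pair; apply: val_inj.
by move=> x; apply: val_inj => /=; rewrite [in RHS](tuple_eta x).
Qed.

Lemma big_tuple0 (F : 0.-tuple 'I_k -> R) : \sum_(x : 0.-tuple 'I_k) F x = F [tuple].
Proof.
rewrite (big_pred1 [tuple]) // => x /=; apply/esym/eqP; exact: tuple0.
Qed.

Lemma chain_weight_ge0 (Q : 'M[R]_k) : (forall i j, 0 <= Q i j) ->
  forall s, 0 <= chain_weight Q s.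
Proof.
move=> Q0; elim=> [|a [|b s] IH] //=.
by rewrite mulr_ge0.
Qed.

Lemma chain_weight_gt0 (Q : 'M[R]_k) : (forall i j, 0 < Q i j) ->
  forall s, 0 < chain_weight Q s.
Proof.
move=> Q0; elim=> [|a [|b s] IH] //=.
by rewrite mulr_gt0.
Qed.

Lemma chain_weight_le (Qs Q : 'M[R]_k) (c : R) :
  (forall i j, 0 <= Q i j) -> (forall i j, 0 <= Qs i j) ->
  (forall i j, Qs i j <= c * Q i j) ->
  forall s, chain_weight Qs s <= c ^+ (size s).-1 * chain_weight Q s.
Proof.
move=> Q0 Qs0 QsQ; elim=> [|a [|b s] IH] /=; rewrite ?mul1r //.
have -> : c ^+ (size s).+1 * (Q a b * chain_weight Q (b :: s)) =
   (c * Q a b) * (c ^+ (size s) * chain_weight Q (b :: s)) by rewrite exprS; ring.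
apply: ler_pM; [exact: Qs0 | exact: (chain_weight_ge0 Qs0 (b :: s)) | exact: QsQ | exact: IH].
Qed.

Lemma sum_chain (Q : 'M[R]_k) : transition_matrix Q ->
  forall n a, \sum_(x : n.-tuple 'I_k) chain_weight Q (a :: x) = 1.
Proof.
move=> HQ; elim=> [|n IH] a; first by rewrite big_tuple0.
rewrite big_tuple_cons.
transitivity (\sum_(b : 'I_k) Q a b).
  apply: eq_bigr => b _.
  rewrite (eq_bigr (fun x : n.-tuple 'I_k => Q a b * chain_weight Q (b :: x))) //.
  by rewrite -mulr_sumr IH mulr1.
by case: (HQ a).
Qed.

Lemma sum_weights (nu : 'I_k -> R) (Q : 'M[R]_k) : in_simplex nu -> transition_matrix Q ->
  forall n, \sum_(x : n.+1.-tuple 'I_k) init_weight nu x * chain_weight Q x = 1.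
Proof.
move=> [_ Hnu] HQ n; rewrite big_tuple_cons -[RHS]Hnu.
apply: eq_bigr => a _ /=.
by rewrite -mulr_sumr (sum_chain HQ) mulr1.
Qed.

End weights.

Section meas.
Context {dT : measure_display} {T : measurableType dT} {R : realType} {k : nat}.
Local Open Scope ereal_scope.

Lemma measurable_log_ratio (a b : T -> R) : measurable_fun setT a -> measurable_fun setT b ->
  (forall z, 0 <= a z)%R -> (forall z, 0 <= b z)%R ->
  measurable_fun setT (fun z => log_ratio (a z) (b z)).
Proof.
move=> ma mb a0 b0.
rewrite (_ : (fun z => _) = fun z => if a z == 0%R then -oo else
   if b z == 0%R then +oo else (ln (a z) - ln (b z))%:E); last first.
  apply/funext => z; rewrite /log_ratio.
  case: eqP => // az; case: eqP => // bz.
  by rewrite ln_div // posrE lt_def; apply/andP; split => //; apply/eqP.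
apply: measurable_fun_ifT.
- exact: measurable_fun_eqr ma (measurable_cst _).
- exact: measurable_cst.
apply: measurable_fun_ifT.
- exact: measurable_fun_eqr mb (measurable_cst _).
- exact: measurable_cst.
apply/measurable_EFinP; apply: measurable_funB.
- exact: measurableT_comp (@measurable_ln R) ma.
- exact: measurableT_comp (@measurable_ln R) mb.
Qed.

Lemma measurable_bigmaxe (I : Type) (s : seq I) (F : I -> T -> \bar R) :
  (forall i, measurable_fun setT (F i)) ->
  measurable_fun setT (fun z => \big[Order.max/-oo]_(i <- s) F i z).
Proof.
move=> mF; elim: s => [|i s IH].
  by under eq_fun do rewrite big_nil; exact: measurable_cst.
under eq_fun do rewrite big_cons.
exact: measurable_maxe.
Qed.

Definition Mf (fs f : 'I_k -> T -> R) (z : T) : \bar R :=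
  \big[Order.max/-oo]_(j < k) log_ratio (fs j z) (f j z).

Lemma measurable_Mf (fs f : 'I_k -> T -> R) : (forall i, measurable_fun setT (fs i)) ->
  (forall i, measurable_fun setT (f i)) ->
  (forall i z, 0 <= fs i z)%R -> (forall i z, 0 <= f i z)%R ->
  measurable_fun setT (Mf fs f).
Proof.
move=> mfs mf fs0 f0; apply: measurable_bigmaxe => j.
exact: measurable_log_ratio.
Qed.

Lemma Mf_ge (fs f : 'I_k -> T -> R) z j : log_ratio (fs j z) (f j z) <= Mf fs f z.
Proof. exact: (le_bigmax -oo (fun j => log_ratio (fs j z) (f j z)) j). Qed.

Lemma Mf_neqNy (fs f : 'I_k -> T -> R) z j : (0 < fs j z)%R -> Mf fs f z != -oo.
Proof.
move=> fs0; have := Mf_ge fs f z j; rewrite /log_ratio gt_eqF //.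
case: eqP => _; first by rewrite leye_eq => /eqP ->.
by case: (Mf fs f z).
Qed.

End meas.

Lemma integral_le_any d (X : measurableType d) (R : realType) (mu : set X -> \bar R)
  (D : set X) (f g : X -> \bar R) : (forall x, D x -> f x <= g x)%E ->
  (\int[mu]_(x in D) f x <= \int[mu]_(x in D) g x)%E.
Proof.
move=> fg; rewrite /integral; apply: leeB; apply: ereal_sup_le.
- move=> _ /= [h hle <-]; exists h => // x; apply: le_trans (hle x) _.
  rewrite !funeposE /patch; case: ifPn => xD; last by [].
  by apply: le_max2 => //; apply: fg; rewrite inE in xD.
- move=> _ /= [h hle <-]; exists h => // x; apply: le_trans (hle x) _.
  rewrite !funenegE /patch; case: ifPn => xD; last by [].
  by apply: le_max2 => //; rewrite leeN2; apply: fg; rewrite inE in xD.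
Qed.

Lemma maxe_EFinM (R : realType) (a : R) (m : \bar R) : 0 <= a ->
  maxe (a%:E * m)%E 0 = (a%:E * maxe m 0)%E.
Proof.
move=> a0; have [->|a0'] := eqVneq a 0; first by rewrite !mul0e maxxx.
have apos : 0 < a by rewrite lt_def a0' a0.
case: m => [r| |] /=.
- by rewrite -EFinM (_ : 0%E = 0%:E) // -!EFin_max -EFinM maxr_pMr // mulr0.
- have H : (a%:E * +oo = +oo)%E by apply: gt0_muley; rewrite lte_fin.
  rewrite H (_ : maxe +oo 0 = +oo)%E //; by apply/max_idPl; rewrite leey.
- have H : (a%:E * -oo = -oo)%E by apply: gt0_muleNy; rewrite lte_fin.
  by rewrite H (_ : maxe -oo 0 = 0)%E ?mule0 //; apply/max_idPr; rewrite leNye.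
Qed.

Section main.
Context {dT : measure_display} {T : measurableType dT} {R : realType} {k : nat}.
Variable lam : {sigma_finite_measure set T -> \bar R}.

Lemma simplex_le1 (v : 'I_k -> R) i : in_simplex v -> v i <= 1.
Proof. by move=> [v0 <-]; rewrite (bigD1 i) //= lerDl sumr_ge0. Qed.

Lemma exists_pos (I : finType) (F : I -> R) : 0 < \sum_i F i -> exists i, 0 < F i.
Proof.
move=> Fs; have /existsP[i Hi] : [exists i, 0 < F i]; last by exists i.
apply: contraLR Fs; rewrite negb_exists => /forallP H; rewrite -leNgt.
by apply: sumr_le0 => i _; rewrite leNgt; exact: H.
Qed.

Lemma int_p1h (g : 'I_k -> T -> R) (nu : 'I_k -> R) (Q : 'M[R]_k) :
  (forall i, is_density lam (g i)) -> (forall i, 0 <= nu i) -> (forall i j, 0 <= Q i j) ->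
  forall (h : T -> \bar R), measurable_fun setT h -> (forall z, 0 <= h z)%E ->
  forall n (t : 'I_n),
  (\int[prod_meas lam n]_y ((hmm_density nu Q g n y)%:E * h (tnth y t)) =
   \sum_(x : n.-tuple 'I_k) (init_weight nu x * chain_weight Q x)%:E *
      \int[lam]_z ((g (tnth x t) z)%:E * h z))%E.
Proof.
move=> gd nu0 Q0 h mh h0 n t.
have mg i : measurable_fun setT (g i) by case: (gd i).
have g0 i z : 0 <= g i z by case: (gd i) => _ [].
have w0 (x : n.-tuple 'I_k) : 0 <= init_weight nu x * chain_weight Q x.
  apply: mulr_ge0; last exact: chain_weight_ge0.
  by case: x => -[|a s] /=.
have [P PE] := prod_meas_sf lam n.
transitivity (\int[P]_y (\sum_(x : n.-tuple 'I_k)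
    (init_weight nu x * chain_weight Q x)%:E * ((Fx k g n x y)%:E * h (tnth y t))))%E.
  rewrite PE; apply: eq_integral => y _.
  rewrite /hmm_density -sumEFin ge0_sume_distrl; last first.
    by move=> x _; rewrite lee_fin mulr_ge0 // Fx_ge0.
  by apply: eq_bigr => x _; rewrite EFinM muleA.
rewrite ge0_integral_sum //; last 2 first.
- move=> x; apply: measurable_funeM.
  apply: emeasurable_funM; first by apply/measurable_EFinP; exact: measurable_Fx.
  exact: measurableT_comp mh (measurable_tnth t).
- move=> x y _; apply: mule_ge0; first by rewrite lee_fin.
  by apply: mule_ge0 => //; rewrite lee_fin Fx_ge0.
apply: eq_bigr => x _.
rewrite ge0_integralZl //.
- by have IF := @int_Fxh _ _ _ lam k g gd h mh h0 n x t; rewrite PE in IF; rewrite IF.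
- apply: emeasurable_funM; first by apply/measurable_EFinP; exact: measurable_Fx.
  exact: measurableT_comp mh (measurable_tnth t).
- by move=> y _; apply: mule_ge0 => //; rewrite lee_fin Fx_ge0.
- by rewrite lee_fin.
Qed.


Lemma main_bound (hk : (0 < k)%N) (mu mus : 'I_k -> R) (qlow : R) (Qs Q : 'M[R]_k)
  (fs f : 'I_k -> T -> R) (eps : R) (n : nat) :
  0 < qlow -> in_Theta_lb lam qlow Qs fs -> in_simplex mus -> in_simplex mu ->
  (forall i, qlow <= mu i) -> 0 < eps ->
  in_Theta_lb lam qlow Q f -> A1a Qs eps Q -> A1b lam fs eps f -> A1c fs f -> (0 < n)%N ->
  (KL (prod_meas lam n) (hmm_density mus Qs fs n) (hmm_density mu Q f n) <=
   (qlow^-1 + (n.-1)%:R * (eps / qlow) + n%:R * eps)%:E)%E.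
Proof.
move=> q0 [[HQs_st HQs_lb] fsd] Hmus Hmu Hmuq e0 [[HQ_st HQ_lb] fd] HA1a HA1b HA1c n0.
have mfs i : measurable_fun setT (fs i) by case: (fsd i).
have fs0 i z : 0 <= fs i z by case: (fsd i) => _ [].
have ifs i : (\int[lam]_z (fs i z)%:E = 1)%E by case: (fsd i) => _ [].
have mf i : measurable_fun setT (f i) by case: (fd i).
have f0 i z : 0 <= f i z by case: (fd i) => _ [].
have if1 i : (\int[lam]_z (f i z)%:E = 1)%E by case: (fd i) => _ [].
have Qs0 i j : 0 <= Qs i j := le_trans (ltW q0) (HQs_lb i j).
have Q0 i j : 0 < Q i j := lt_le_trans q0 (HQ_lb i j).
have mus0 i : 0 <= mus i by case: Hmus.
pose i0 : 'I_k := Ordinal hk.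
have q1 : qlow <= 1.
  by apply: le_trans (HQs_lb i0 i0) _; apply: (simplex_le1 (v := fun j => Qs i0 j)).
case: n n0 => // m _.
pose c := 1 + eps / qlow.
pose K := c ^+ m / qlow.
have c_gt0 : 0 < c by rewrite /c addr_gt0 // divr_gt0.
have K_gt0 : 0 < K by rewrite /K divr_gt0 // exprn_gt0.
pose p1 := hmm_density mus Qs fs m.+1.
pose p2 := hmm_density mu Q f m.+1.
pose w1 := fun x : m.+1.-tuple 'I_k => init_weight mus x * chain_weight Qs x.
pose w2 := fun x : m.+1.-tuple 'I_k => init_weight mu x * chain_weight Q x.
have w1_ge0 x : 0 <= w1 x.
  apply: mulr_ge0; last exact: chain_weight_ge0.
  by case/tupleP: x => a x /=.
have w2_gt0 x : 0 < w2 x.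
  apply: mulr_gt0; last exact: chain_weight_gt0.
  by case/tupleP: x => a x /=; apply: lt_le_trans q0 (Hmuq a).
have sw1 : \sum_x w1 x = 1 := sum_weights Hmus HQs_st m.
have p1E y : p1 y = \sum_x w1 x * Fx k fs _ x y by [].
have p2E y : p2 y = \sum_x w2 x * Fx k f _ x y by [].
have p1_ge0 y : 0 <= p1 y.
  by rewrite p1E; apply: sumr_ge0 => x _; rewrite mulr_ge0 // Fx_ge0.
have p2_ge0 y : 0 <= p2 y.
  by rewrite p2E; apply: sumr_ge0 => x _; rewrite mulr_ge0 ?Fx_ge0 // ltW.
have mp1 : measurable_fun setT p1.
  apply: measurable_sum => x; apply: measurable_funM; first exact: measurable_cst.
  exact: measurable_Fx.
have mp2 : measurable_fun setT p2.
  apply: measurable_sum => x; apply: measurable_funM; first exact: measurable_cst.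
  exact: measurable_Fx.
have QsQ i j : Qs i j <= c * Q i j.
  have H1 : Qs i j - Q i j < eps.
    apply: le_lt_trans (HA1a i j); rewrite distrC; exact: ler_norm.
  have H2 : eps <= eps / qlow * Q i j.
    rewrite -mulrA ler_peMr ?(ltW e0) // ler_pdivlMl // mulr1; exact: HQ_lb.
  rewrite /c mulrDl mul1r; lra.
have w1le x : w1 x <= K * w2 x.
  rewrite /w1 /w2 /K.
  have HC := chain_weight_le (fun i j => ltW (Q0 i j)) Qs0 QsQ x.
  rewrite size_tuple /= in HC.
  have HI : init_weight mus x <= qlow^-1 * init_weight mu x.
    case/tupleP: x {HC} => a x /=.
    apply: le_trans (simplex_le1 a Hmus) _.
    by rewrite ler_pdivlMl // mulr1.
  have -> : c ^+ m / qlow * (init_weight mu x * chain_weight Q x) =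
     (qlow^-1 * init_weight mu x) * (c ^+ m * chain_weight Q x) by ring.
  apply: ler_pM => //; first by case/tupleP: x {HC HI} => a x /=.
  exact: chain_weight_ge0.

pose M := Mf fs f.
have mM : measurable_fun setT M := measurable_Mf mfs mf fs0 f0.
have mMp : measurable_fun setT (M^\+)%E := measurable_funepos mM.
have mMn : measurable_fun setT (M^\-)%E := measurable_funeneg mM.
pose A := fun i => (\int[lam]_z ((fs i z)%:E * (M^\+)%E z))%E.
pose B := fun i => (\int[lam]_z ((fs i z)%:E * (M^\-)%E z))%E.
have A_ge0 i : (0 <= A i)%E.
  by apply: integral_ge0 => z _; apply: mule_ge0; rewrite ?lee_fin.
have B_ge0 i : (0 <= B i)%E.
  by apply: integral_ge0 => z _; apply: mule_ge0; rewrite ?lee_fin.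
have B_le1 i : (B i <= 1)%E.
  rewrite -(if1 i); apply: integral_le_any => z _.
  have [fsz|fspos] := eqVneq (fs i z) 0; first by rewrite fsz mul0e lee_fin.
  have fsp : 0 < fs i z by rewrite lt_def fspos fs0.
  have HM := Mf_ge fs f z i.
  rewrite /log_ratio (negbTE fspos) -/M in HM.
  rewrite funenegE.
  move: HM; case: eqP => [_|/eqP fnz].
    by rewrite leye_eq => /eqP ->; rewrite (_ : maxe (- +oo) 0 = 0)%E ?mule0 ?lee_fin //;
      apply/max_idPr; rewrite leNye.
  have fp : 0 < f i z by rewrite lt_def fnz f0.
  rewrite -/M; case: (M z) => [r| |] //= Hr; last first.
    by rewrite (_ : maxe -oo 0 = 0)%E ?mule0 ?lee_fin //; apply/max_idPr; rewrite leNye.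
  rewrite lee_fin in Hr.
  rewrite (_ : 0%E = 0%:E) // -EFin_max -EFinM lee_fin.
  have [r0|r0] := leP 0 r.
    rewrite (_ : Num.max (- r) 0 = 0) ?mulr0 //; apply/max_idPr; lra.
  rewrite (_ : Num.max (- r) 0 = - r); last by apply/max_idPl; lra.
  have Hl : - r <= ln (f i z / fs i z).
    rewrite -[f i z / fs i z]invf_div lnV ?posrE ?divr_gt0 //; lra.
  have Hs := ln_sublinear (divr_gt0 fp fsp).
  have H : - r <= f i z / fs i z by lra.
  by apply: le_trans (ler_wpM2l (ltW fsp) H) _; rewrite mulrC divfK.
have HAB i : (\int[lam]_z ((fs i z)%:E * M z) = A i - B i)%E.
  rewrite integralE; congr (_ - _)%E; apply: eq_integral => z _.
    by rewrite funeposE maxe_EFinM // funeposE.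
  by rewrite funenegE -muleN maxe_EFinM // funenegE.
have B_fin i : B i \is a fin_num by rewrite ge0_fin_numE ?(le_lt_trans (B_le1 i)) ?ltey.
have A_fin i : A i \is a fin_num.
  rewrite ge0_fin_numE // ltey; apply/eqP => Ay.
  have := HA1b i; rewrite HAB Ay.
  by move: (B_fin i); case: (B i) => // r _.
pose a := fun i => fine (A i).
pose b := fun i => fine (B i).
have ab i : a i - b i < eps.
  have := HA1b i; rewrite HAB -(fineK (A_fin i)) -(fineK (B_fin i)) -EFinB lte_fin.
  by [].
have b_ge0 i : 0 <= b i by rewrite /b fine_ge0.
have a_ge0 i : 0 <= a i by rewrite /a fine_ge0.

have [P PE] := prod_meas_sf lam m.+1.
have I2 (h : T -> \bar R) (t : 'I_m.+1) : measurable_fun setT h -> (forall z, 0 <= h z)%E ->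
  (\int[P]_y ((p1 y)%:E * h (tnth y t)) =
   \sum_x (w1 x)%:E * \int[lam]_z ((fs (tnth x t) z)%:E * h z))%E.
  move=> mh h0; have := @int_p1h fs mus Qs fsd mus0 Qs0 h mh h0 m.+1 t.
  by rewrite PE.
have I1 : (\int[P]_y (p1 y)%:E = 1)%E.
  transitivity (\int[P]_y ((p1 y)%:E * (cst 1%E) (tnth y ord0)))%E.
    by apply: eq_integral => y _; rewrite /= mule1.
  rewrite I2; last 2 first.
  - exact: measurable_cst.
  - by move=> z; rewrite /= lee01.
  rewrite (eq_bigr (fun x => (w1 x)%:E)); last first.
    by move=> x _; under eq_integral do rewrite /= mule1; rewrite ifs mule1.
  by rewrite sumEFin sw1.
have intp1 : P.-integrable setT (EFin \o p1).
  apply/integrableP; split; first exact/measurable_EFinP.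
  rewrite (eq_integral (fun y => (p1 y)%:E)); last first.
    by move=> y _; apply: gee0_abs; rewrite /= lee_fin.
  by rewrite I1 ltry.
pose G := fun (t : 'I_m.+1) (y : m.+1.-tuple T) => ((p1 y)%:E * M (tnth y t))%E.
have mG t : measurable_fun setT (G t).
  apply: emeasurable_funM; first exact/measurable_EFinP.
  exact: measurableT_comp mM (measurable_tnth t).
have Gpos t y : ((G t)^\+ y = (p1 y)%:E * (M^\+)%E (tnth y t))%E.
  by rewrite funeposE maxe_EFinM // funeposE.
have Gneg t y : ((G t)^\- y = (p1 y)%:E * (M^\-)%E (tnth y t))%E.
  by rewrite funenegE -muleN maxe_EFinM // funenegE.
have IGp t : (\int[P]_y (G t)^\+ y = (\sum_x w1 x * a (tnth x t))%:E)%E.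
  under eq_integral do rewrite Gpos.
  rewrite I2; [|exact: mMp|by move=> z; exact: funepos_ge0].
  rewrite -sumEFin; apply: eq_bigr => x _.
  by rewrite -/(A _) -(fineK (A_fin _)) -EFinM.
have IGn t : (\int[P]_y (G t)^\- y = (\sum_x w1 x * b (tnth x t))%:E)%E.
  under eq_integral do rewrite Gneg.
  rewrite I2; [|exact: mMn|by move=> z; exact: funeneg_ge0].
  rewrite -sumEFin; apply: eq_bigr => x _.
  by rewrite -/(B _) -(fineK (B_fin _)) -EFinM.
have intG t : P.-integrable setT (G t).
  apply/integrableP; split; first exact: mG.
  rewrite (_ : (fun y => `|G t y|)%E = (fun y => (G t)^\+ y + (G t)^\- y)%E); last first.
    by apply/funext => y; have := fune_abse (G t); move/(congr1 (fun F => F y)).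
  rewrite ge0_integralD //; first by rewrite IGp IGn -EFinD ltry.
  - exact: measurable_funepos.
  - exact: measurable_funeneg.
have Gle t : (\int[P]_y G t y <= eps%:E)%E.
  rewrite integralE IGp IGn -EFinB lee_fin -sumrB.
  apply: le_trans (_ : \sum_x w1 x * eps <= eps).
    apply: ler_sum => x _; rewrite -mulrBr; apply: ler_wpM2l => //; exact: ltW.
  by rewrite -mulr_suml sw1 mul1r.

pose LK := ln K.
pose g := fun y : m.+1.-tuple T => ((p1 y * LK)%:E + \sum_(t < m.+1) G t y)%E.
have intp1K : P.-integrable setT (fun y => (p1 y * LK)%:E).
  rewrite (_ : (fun y => _) = (fun y => LK%:E * (EFin \o p1) y)%E); last first.
    by apply/funext => y; rewrite /= EFinM muleC.
  exact: integrableZl.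
have gint : (\int[P]_y g y = LK%:E + \sum_(t < m.+1) \int[P]_y G t y)%E.
  rewrite integralD //; last exact: integrable_sum.
  rewrite integral_sum //; congr (_ + _)%E.
  under eq_integral do rewrite EFinM muleC.
  by rewrite integralZl // I1 mule1.
have hg y : ((p1 y * ln (p1 y / p2 y))%:E <= g y)%E.
  have [p1z|p1pos] : p1 y = 0 \/ 0 < p1 y.
    by have := p1_ge0 y; rewrite le0r => /orP[/eqP ->|->]; [left|right].
    rewrite /g p1z !mul0r big1 ?adde0 // => t _.
    by rewrite /G p1z mul0e.
  have [x0 Hx0] : exists x0, 0 < w1 x0 * Fx k fs _ x0 y.
    by apply: exists_pos; rewrite -p1E.
  have Fpos : 0 < Fx k fs _ x0 y.
    rewrite lt_def Fx_ge0 // andbT; apply: contraTneq Hx0 => ->.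
    by rewrite mulr0 ltxx.
  have fspos t : 0 < fs (tnth x0 t) (tnth y t).
    rewrite lt_def fs0 andbT; apply: contraTneq Fpos => H.
    by rewrite /Fx (bigD1 t) //= H mul0r ltxx.
  have MnNy t : M (tnth y t) != -oo%E := @Mf_neqNy _ _ _ _ fs f (tnth y t) (tnth x0 t) (fspos t).
  have [[t Mt]|Mfin] := pselect (exists t, M (tnth y t) = +oo%E).
    rewrite /g (_ : \sum_(t < m.+1) G t y = +oo)%E ?addey ?leey //.
    apply/esum_eqyP.
      move=> t' _; rewrite /G; move: (MnNy t'); case: (M (tnth y t')) => //.
      by rewrite gt0_muley ?lte_fin.
    by exists t; split => //; rewrite /G Mt gt0_muley ?lte_fin.
  have Mfin' t : M (tnth y t) \is a fin_num.
    rewrite fin_numE MnNy /=; apply/eqP => H; apply: Mfin; by exists t.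
  pose r := fun t => fine (M (tnth y t)).
  have gE : g y = (p1 y * LK + \sum_(t < m.+1) p1 y * r t)%:E.
    rewrite /g EFinD -sumEFin; congr (_ + _)%E; apply: eq_bigr => t _.
    by rewrite /G /r EFinM fineK.
  rewrite gE lee_fin.
  have key : p1 y <= K * expR (\sum_(t < m.+1) r t) * p2 y.
    rewrite p1E p2E mulr_sumr; apply: ler_sum => x _.
    have Fle : Fx k fs _ x y <= expR (\sum_(t < m.+1) r t) * Fx k f _ x y.
      have [[t ft]|nz] := pselect (exists t, fs (tnth x t) (tnth y t) = 0).
        rewrite /Fx (bigD1 t) //= ft mul0r.
        by apply: mulr_ge0; [exact: expR_ge0 | exact: Fx_ge0].
      rewrite expR_sum /Fx -big_split /=; apply: ler_prod => t _.
      apply/andP; split; first exact: fs0.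
      have fsp : 0 < fs (tnth x t) (tnth y t).
        rewrite lt_def fs0 andbT; apply/eqP => H; apply: nz; by exists t.
      have := Mf_ge fs f (tnth y t) (tnth x t).
      rewrite -/M -(fineK (Mfin' t)) /log_ratio (gt_eqF fsp).
      case: eqP => [_|/eqP fnz]; first by rewrite leye_eq.
      have fp : 0 < f (tnth x t) (tnth y t) by rewrite lt_def fnz f0.
      rewrite lee_fin => Hr.
      rewrite -(ler_pdivrMr _ _ fp).
      rewrite -[X in X <= _]lnK ?posrE ?divr_gt0 // ler_expR; exact: Hr.
    have -> : K * expR (\sum_(t < m.+1) r t) * (w2 x * Fx k f _ x y) =
      (K * w2 x) * (expR (\sum_(t < m.+1) r t) * Fx k f _ x y) by rewrite mulrACA.
    apply: ler_pM; [exact: w1_ge0 | exact: Fx_ge0 | exact: w1le | exact: Fle].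
  have p2pos : 0 < p2 y.
    rewrite lt_def p2_ge0 andbT; apply/eqP => p2z.
    by move: key; rewrite p2z mulr0 leNgt p1pos.
  have Hln : ln (p1 y / p2 y) <= LK + \sum_(t < m.+1) r t.
    rewrite -[LK + _]expRK ler_ln ?posrE ?divr_gt0 ?expR_gt0 //.
    rewrite expRD lnK ?posrE // ler_pdivrMr //.
  by rewrite -mulr_sumr -mulrDr ler_pM2l.

have pos12 y : 0 < p1 y -> 0 < p2 y.
  move=> p1pos.
  have [x0 Hx0] : exists x0, 0 < w1 x0 * Fx k fs _ x0 y.
    by apply: exists_pos; rewrite -p1E.
  have Fpos : 0 < Fx k fs _ x0 y.
    rewrite lt_def Fx_ge0 // andbT; apply: contraTneq Hx0 => ->.
    by rewrite mulr0 ltxx.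
  have fspos t : 0 < fs (tnth x0 t) (tnth y t).
    rewrite lt_def fs0 andbT; apply: contraTneq Fpos => H.
    by rewrite /Fx (bigD1 t) //= H mul0r ltxx.
  have ex t : exists j, 0 < f j (tnth y t).
    apply: exists_pos; apply: HA1c.
    apply: lt_le_trans (fspos t) _.
    by rewrite (bigD1 (tnth x0 t)) //= lerDl sumr_ge0.
  pose x' := [tuple xchoose (ex t) | t < m.+1].
  have Fp' : 0 < Fx k f _ x' y.
    apply: prodr_gt0 => t _; rewrite tnth_mktuple; exact: (xchooseP (ex t)).
  rewrite p2E (bigD1 x') //=.
  apply: lt_le_trans (mulr_gt0 (w2_gt0 x') Fp') _.
  by rewrite lerDl sumr_ge0 // => x _; rewrite mulr_ge0 ?Fx_ge0 // ltW.
have AC : abs_cont P p1 p2.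
  move=> A0 mA0; rewrite /dens_meas => H.
  have ae2 : ae_eq P A0 (EFin \o p2) (cst 0%E).
    apply/(ae_eq_integral_abs P mA0 _).1.
      exact/measurable_EFinP/measurable_funTS.
    rewrite -H; apply: eq_integral => y _; apply: gee0_abs; rewrite /= lee_fin.
    exact: p2_ge0.
  rewrite (ae_eq_integral (cst 0%E)) //; first by rewrite integral0.
    exact/measurable_EFinP/measurable_funTS.
  apply: filterS ae2 => y Hy Ay; have := Hy Ay; rewrite /= => -[p2y].
  have [p1z|p1pos] : p1 y = 0 \/ 0 < p1 y.
    by have := p1_ge0 y; rewrite le0r => /orP[/eqP ->|->]; [left|right].
    by rewrite /= p1z.
  by have := pos12 y p1pos; rewrite p2y ltxx.
rewrite PE /KL (asboolT AC).
apply: le_trans (integral_le_any _ (fun y _ => hg y)) _.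
rewrite gint.
apply: le_trans (leeD (lexx _) (lee_sum _ (fun t _ => Gle t))) _.
rewrite sumEFin -EFinD lee_fin sumr_const card_ord -[eps *+ _]mulr_natl /=.
rewrite lerD2r.
have HK : LK <= qlow^-1 + m%:R * (eps / qlow).
  rewrite /LK /K lnM ?posrE ?exprn_gt0 ?invr_gt0 // lnXn // addrC -[ln c *+ m]mulr_natl.
  apply: lerD; first by apply: ltW; apply: ln_sublinear; rewrite invr_gt0.
  apply: ler_wpM2l => //; rewrite /c; apply: le_ln1Dx.
  by apply: lt_le_trans (_ : -1 < 0) _; rewrite ?ltrN10 ?divr_ge0 // ltW.
exact: HK.
Qed.

End main.

Unset Implicit Arguments.

Theorem lemma1 (R : realType) (k d : nat) (hk : (0 < k)%N) (hd : (0 < d)%N)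
  (lam : {sigma_finite_measure set (d.-tuple R) -> \bar R})
  (GQ : set (set (trans_mat k R)))
  (Gf : set (set (emis k (d.-tuple R) R)))
  (piQ : probability (g_sigma_algebraType GQ) R)
  (pif : probability (g_sigma_algebraType Gf) R)
  (mu : 'I_k -> R)
  (qlow : R) (Qs : 'M[R]_k) (fs : 'I_k -> d.-tuple R -> R) (mus : 'I_k -> R)
  (eps0 : R)
  (Theta : R -> set (g_sigma_algebraType GQ * g_sigma_algebraType Gf)) :
  0 < qlow ->
  in_Theta_lb lam qlow Qs fs ->
  is_stationary Qs mus ->
  in_simplex mu -> (forall i, qlow <= mu i) ->
  (* assumption (A1) *)
  0 < eps0 ->
  (forall eps, 0 < eps < eps0 ->
     measurable (Theta eps) /\ (0 < (piQ \x pif) (Theta eps))%E /\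
     forall theta, Theta eps theta ->
       let Q : 'M[R]_k := theta.1 in
       let f : 'I_k -> d.-tuple R -> R := theta.2 in
       in_Theta_lb lam qlow Q f /\ A1a Qs eps Q /\ A1b lam fs eps f /\
       A1c fs f /\ A1d fs f /\ A1e lam fs f) ->
  (* conclusion *)
  forall eps, 0 < eps < 1 -> eps < eps0 ->
  exists N : nat, forall n : nat, (N <= n)%N ->
    forall theta, Theta eps theta ->
      let Q : 'M[R]_k := theta.1 in
      let f : 'I_k -> d.-tuple R -> R := theta.2 in
      (((n%:R)^-1)%:E *
        KL (prod_meas lam n) (hmm_density mus Qs fs n)
           (hmm_density mu Q f n)
      <= (3 / qlow * eps)%:E)%E.
Proof.
move=> q0 HThs Hst Hmu Hmuq e00 HA1 eps /andP[e0 e1] eps_lt.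
have [_ [_ HTh]] := HA1 eps (introT andP (conj e0 eps_lt)).
have Hmus : in_simplex mus := proj1 Hst.
have q1 : qlow <= 1.
  case: HThs => [[HQs_st HQs_lb] _].
  apply: le_trans (HQs_lb (Ordinal hk) (Ordinal hk)) _.
  by apply: (simplex_le1 (v := fun j => Qs (Ordinal hk) j)).
exists (Num.trunc (eps^-1)).+1 => n Nn theta Th /=.
have [Hth [HA1a [HA1b [HA1c _]]]] := HTh theta Th.
have n0 : (0 < n)%N by apply: leq_trans Nn.
have MB := @main_bound _ _ _ k lam hk mu mus qlow Qs theta.1 fs theta.2 eps n
  q0 HThs Hmus Hmu Hmuq e0 Hth HA1a HA1b HA1c n0.
apply: le_trans (lee_wpmul2l _ MB) _; first by rewrite lee_fin invr_ge0.
rewrite -EFinM lee_fin.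
have nn0 : 0 < (n%:R : R) by rewrite ltr0n.
have en : eps^-1 < n%:R.
  apply: lt_le_trans (truncnS_gt _) _; by rewrite ler_nat.
have ue : (n%:R)^-1 < eps.
  by rewrite -(invrK eps) ltf_pV2 ?posrE ?invr_gt0.
have m1 : ((n.-1)%:R : R) <= n%:R by rewrite ler_nat leq_pred.
set u := (n%:R)^-1 in ue *.
set v := qlow^-1.
have v1 : 1 <= v by rewrite /v invf_ge1.
have un : u * n%:R = 1 by rewrite /u mulVf // gt_eqF.
have u0 : 0 < u by rewrite /u invr_gt0.
have H1 : u * v <= eps * v by rewrite ler_pM2r ?ltW // (lt_le_trans ltr01 v1).
have H2 : u * ((n.-1)%:R * (eps * v)) <= eps * v.
  have ev : 0 <= eps * v by rewrite mulr_ge0 ?ltW // (lt_le_trans ltr01 v1).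
  apply: le_trans (_ : u * (n%:R * (eps * v)) <= eps * v).
    by rewrite ler_pM2l //; apply: ler_wpM2r.
  by rewrite !mulrA un mul1r.
have H3 : u * (n%:R * eps) <= eps * v.
  by rewrite mulrA un mul1r ler_peMr // ltW.
rewrite !mulrDr; apply: le_trans (lerD (lerD H1 H2) H3) _.
lra.
Qed.
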